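(* Let $A$ be a commutative ring and let $x_0,x_1,\ldots,x_n$ be a path in $\Gamma(A)$. Fix $X\in\mathrm{GL}_2(A)$ with $x_0=\infty\cdot X$. Then there exist unique $a_1,\ldots,a_n\in A$ satisfying $x_i=\infty\cdot E(a_i)E(a_{i-1})\cdots E(a_1)X$ for $i=1,\ldots,n$. Conversely, given $X\in\mathrm{GL}_2(A)$ and $a_1,\ldots,a_n\in A$, setting $x_0:=\infty\cdot X$ and $x_i:=\infty\cdot E(a_i)\cdots E(a_1)X$ for $1\le i\le n$, the sequence $x_0,x_1,\ldots,x_n$ is a path in $\Gamma(A)$.
   Context: A unimodular row over $A$ is $(a,b)\in A^2$ with $aA+bA=A$. $\Gamma(A)$ is the graph whose vertices are classes $[u]$ of unimodular rows modulo multiplication by units, with $\{[u],[v]\}$ an edge iff the matrix with rows $u,v$ lies in $\mathrm{GL}_2(A)$; a path is a sequence of vertices in which consecutive vertices are adjacent. $\mathrm{GL}_2(A)$ acts on vertices on the right by $[u]\cdot M=[uM]$; $\infty=[(1,0)]$. $E(a)=\begin{pmatrix}a&1\\-1&0\end{pmatrix}$. *)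

(* Defs.v *)
From HB Require Import structures.
From mathcomp Require Import all_boot all_order all_algebra.
Set Implicit Arguments. Unset Strict Implicit. Unset Printing Implicit Defensive.
Import GRing.Theory.
Local Open Scope ring_scope.

Section Gamma.
Variable A : comPzRingType.

Definition is_unitA (c : A) : Prop := exists d : A, c * d = 1.

Definition unimodular (u : 'rV[A]_2) : Prop :=
  exists c d : A, u 0 0 * c + u 0 1 * d = 1.

(* same vertex of Gamma(A): classes modulo multiplication by units *)
Definition same_vertex (u v : 'rV[A]_2) : Prop :=
  exists c : A, is_unitA c /\ v = c *: u.

Definition mx2 (u v : 'rV[A]_2) : 'M[A]_2 :=
  \matrix_(i < 2, j < 2) (if (i : nat) == 0%N then u 0 j else v 0 j).

Definition inGL2 (M : 'M[A]_2) : Prop :=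
  exists N : 'M[A]_2, M *m N = 1%:M /\ N *m M = 1%:M.

(* edge relation of Gamma(A) on representatives (well defined on classes) *)
Definition adjacent (u v : 'rV[A]_2) : Prop := inGL2 (mx2 u v).

(* x_0, ..., x_n (representatives) is a path in Gamma(A) *)
Definition is_path (n : nat) (x : nat -> 'rV[A]_2) : Prop :=
  (forall i, (i <= n)%N -> unimodular (x i)) /\
  (forall i, (i < n)%N -> adjacent (x i) (x i.+1)).

Definition infty : 'rV[A]_2 := \row_(j < 2) (if (j : nat) == 0%N then 1 else 0).

Definition Emx (a : A) : 'M[A]_2 :=
  \matrix_(i < 2, j < 2)
    (if (i : nat) == 0%N then (if (j : nat) == 0%N then a else 1)
     else (if (j : nat) == 0%N then -1 else 0)).

Fixpoint Eprod (a : nat -> A) (i : nat) : 'M[A]_2 :=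
  match i with
  | 0 => 1%:M
  | k.+1 => Emx (a k.+1) *m Eprod a k
  end.

End Gamma.

(* Main.v *)
Require Import Defs.
From mathcomp Require Import all_boot all_order all_algebra.
From mathcomp Require Import ring.
Import GRing.Theory.
Local Open Scope ring_scope.
Set Implicit Arguments.
Section S.
Variable A : comPzRingType.
Implicit Types (M N : 'M[A]_2) (u v : 'rV[A]_2) (a b : nat -> A).

Lemma sum2 (F : 'I_2 -> A) : \sum_(i < 2) F i = F 0 + F 1.
Proof. by rewrite !big_ord_recl big_ord0 addr0; congr (_ + F _); apply/val_inj. Qed.

Lemma ord2P (i : 'I_2) : i = 0 \/ i = 1.
Proof. case: i => [[|[|i]] Hi] //; [left|right]; exact/val_inj. Qed.

Lemma rv2P u v : u 0 0 = v 0 0 -> u 0 1 = v 0 1 -> u = v.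
Proof.
move=> h0 h1; apply/rowP => j.
case: j => [[|[|k]] Hk] //.
- by rewrite (_ : Ordinal Hk = 0) //; apply/val_inj.
- by rewrite (_ : Ordinal Hk = 1) //; apply/val_inj.
Qed.

Lemma inftyE M : infty A *m M = row 0 M.
Proof. by apply/rowP => j; rewrite !mxE sum2 !mxE /= mul1r mul0r addr0. Qed.

Lemma mx2_mul u v M : mx2 u v *m M = mx2 (u *m M) (v *m M).
Proof.
apply/matrixP => i j; rewrite !mxE; case: ifP => h;
by apply: eq_bigr => k _; rewrite /mx2 mxE h.
Qed.
Definition det2 M := M 0 0 * M 1 1 - M 0 1 * M 1 0.

Lemma det2_mul M N : det2 (M *m N) = det2 M * det2 N.
Proof. rewrite /det2 !mxE !sum2; ring. Qed.

Lemma det2_1 : det2 1%:M = 1.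
Proof. by rewrite /det2 !mxE /= mulr1 mulr0 subr0. Qed.

Lemma inGL2_det M : inGL2 M -> exists k, det2 M * k = 1.
Proof. by case=> N [h _]; exists (det2 N); rewrite -det2_mul h det2_1. Qed.

Lemma det_inGL2 M k : det2 M * k = 1 -> inGL2 M.
Proof.
move=> h.
exists (\matrix_(i < 2, j < 2)
   (if (i : nat) == 0%N then (if (j : nat) == 0%N then k * M 1 1 else - k * M 0 1)
    else (if (j : nat) == 0%N then - k * M 1 0 else k * M 0 0))).
move: h; rewrite /det2 => h.
split; apply/matrixP => i j; rewrite !mxE sum2 !mxE /=;
 case: (ord2P i) => ->; case: (ord2P j) => -> /=;
 (try rewrite -h); ring.
Qed.
Lemma EmxM0 (a : A) M j : (Emx a *m M) 0 j = a * M 0 j + M 1 j.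
Proof. by rewrite !mxE sum2 /Emx !mxE /= mul1r. Qed.

Lemma EmxM1 (a : A) M j : (Emx a *m M) 1 j = - M 0 j.
Proof. by rewrite !mxE sum2 /Emx !mxE /= mul0r addr0 mulN1r. Qed.

Lemma det2_Emx (a : A) : det2 (Emx a) = 1.
Proof. by rewrite /det2 /Emx !mxE /= mulr0 sub0r mulrN1 opprK. Qed.

Lemma det2_Eprod a i : det2 (Eprod a i) = 1.
Proof. elim: i => [|i IH] /=; first exact: det2_1. by rewrite det2_mul det2_Emx IH mulr1. Qed.

Lemma Eprod_ext a b i : (forall j, (1 <= j <= i)%N -> b j = a j) -> Eprod b i = Eprod a i.
Proof.
elim: i => [|i IH] h //=.
rewrite h ?IH // => [j /andP[j1 ji]|]; last by rewrite /= leqnn.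
by apply: h; rewrite j1 (leq_trans ji).
Qed.

Lemma inGL2_EX a i X : inGL2 X -> inGL2 (Eprod a i *m X).
Proof.
move=> /inGL2_det [k hk]; apply: (@det_inGL2 _ k).
by rewrite det2_mul det2_Eprod mul1r.
Qed.

Lemma inv_eqs M : inGL2 M -> exists N : 'M[A]_2,
  [/\ M 0 0 * N 0 0 + M 0 1 * N 1 0 = 1, M 1 0 * N 0 0 + M 1 1 * N 1 0 = 0,
      M 0 0 * N 0 1 + M 0 1 * N 1 1 = 0, M 1 0 * N 0 1 + M 1 1 * N 1 1 = 1 &
      N *m M = 1%:M].
Proof.
case=> N [h1 h2]; exists N.
have e i j := congr1 (fun P : 'M[A]_2 => P i j) h1.
move: (e 0 0) (e 1 0) (e 0 1) (e 1 1); rewrite /= !mxE !sum2 /= => -> -> -> ->.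
by split.
Qed.

Lemma row0E M j : (row 0 M) 0 j = M 0 j. Proof. by rewrite mxE. Qed.
Lemma scaleE (c : A) u j : (c *: u) 0 j = c * u 0 j. Proof. by rewrite mxE. Qed.

Lemma exist_step Y u v : inGL2 Y -> same_vertex u (row 0 Y) -> adjacent u v ->
  exists a0 : A, same_vertex v (row 0 (Emx a0 *m Y)).
Proof.
move=> /inv_eqs [N [h00 h10 h01 h11 hNY]] [c [[d hcd] hu]] /inGL2_det [k hk].
set p := (v *m N) 0 0; set q := (v *m N) 0 1.
have hv j : v 0 j = p * Y 0 j + q * Y 1 j.
  have : v = (v *m N) *m Y by rewrite -mulmxA hNY mulmx1.
  by move/(congr1 (fun w : 'rV_2 => w 0 j)) => /= ->; rewrite mxE sum2.
have hu' j : u 0 j = d * Y 0 j.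
  have := congr1 (fun w : 'rV_2 => w 0 j) hu; rewrite /= row0E scaleE => ->.
  by rewrite mulrA (mulrC d) hcd mul1r.
set e := d * det2 Y * k.
have hqe : q * e = 1.
  rewrite -hk /e /det2 /mx2 !mxE /= hu' !hv hu' /det2; ring.
exists (p * e); exists e; split; first by exists q; rewrite mulrC.
apply/rowP => j; rewrite row0E scaleE EmxM0 hv.
transitivity (p * e * Y 0 j + (q * e) * Y 1 j); first by rewrite hqe mul1r.
ring.
Qed.

Lemma uniq_step Y v (a b : A) : inGL2 Y ->
  same_vertex v (row 0 (Emx a *m Y)) -> same_vertex v (row 0 (Emx b *m Y)) -> b = a.
Proof.
move=> /inv_eqs [N [h00 h10 h01 h11 _]] [c [[d hcd] ha]] [c' [[d' hcd'] hb]].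
have e j : c' * (a * Y 0 j + Y 1 j) = c * (b * Y 0 j + Y 1 j).
  have := congr1 (fun w : 'rV_2 => w 0 j) ha; rewrite /= row0E scaleE EmxM0 => ->.
  have := congr1 (fun w : 'rV_2 => w 0 j) hb; rewrite /= row0E scaleE EmxM0 => ->.
  ring.
have e0 := e 0; have e1 := e 1.
have E1 : c' * a = c * b.
  transitivity (c' * a * (Y 0 0 * N 0 0 + Y 0 1 * N 1 0) + c' * (Y 1 0 * N 0 0 + Y 1 1 * N 1 0)).
    by rewrite h00 h10; ring.
  transitivity ((c' * (a * Y 0 0 + Y 1 0)) * N 0 0 + (c' * (a * Y 0 1 + Y 1 1)) * N 1 0).
    by ring.
  rewrite e0 e1.
  transitivity (c * b * (Y 0 0 * N 0 0 + Y 0 1 * N 1 0) + c * (Y 1 0 * N 0 0 + Y 1 1 * N 1 0)).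
    by ring.
  by rewrite h00 h10; ring.
have E2 : c' = c.
  transitivity (c' * a * (Y 0 0 * N 0 1 + Y 0 1 * N 1 1) + c' * (Y 1 0 * N 0 1 + Y 1 1 * N 1 1)).
    by rewrite h01 h11; ring.
  transitivity ((c' * (a * Y 0 0 + Y 1 0)) * N 0 1 + (c' * (a * Y 0 1 + Y 1 1)) * N 1 1).
    by ring.
  rewrite e0 e1.
  transitivity (c * b * (Y 0 0 * N 0 1 + Y 0 1 * N 1 1) + c * (Y 1 0 * N 0 1 + Y 1 1 * N 1 1)).
    by ring.
  by rewrite h01 h11; ring.
rewrite E2 in E1.
by rewrite -[b]mul1r -[a]mul1r -hcd !(mulrC c) -!mulrA E1.
Qed.
Lemma exist_all Nn x X : is_path Nn x -> inGL2 X ->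
  same_vertex (x 0%N) (infty A *m X) -> forall n, (n <= Nn)%N ->
  exists a, forall i, (i <= n)%N -> same_vertex (x i) (row 0 (Eprod a i *m X)).
Proof.
move=> [hun hadj] hX h0; elim=> [|n IH] hn.
  exists (fun _ => 0) => i; rewrite leqn0 => /eqP -> /=.
  by rewrite mul1mx -inftyE.
have [a ha] := IH (ltnW hn).
have [a0 h] := exist_step (inGL2_EX a n hX) (ha n (leqnn n)) (hadj n hn).
exists (fun k => if k == n.+1 then a0 else a k) => i; rewrite leq_eqVlt => /orP [/eqP ->|hi].
  rewrite /= eqxx (Eprod_ext a) -?mulmxA // => j /andP [_ jn].
  by rewrite ifN // neq_ltn ltnS jn.
rewrite (Eprod_ext a); first exact: ha.
move=> j /andP [_ ji]; rewrite ifN // neq_ltn ltnS (leq_trans ji) //.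
Qed.
End S.

Theorem lemma3p1 (A : comPzRingType) :
  (forall (n : nat) (x : nat -> 'rV[A]_2) (X : 'M[A]_2),
      is_path n x -> inGL2 X -> same_vertex (x 0%N) (infty A *m X) ->
      exists a : nat -> A,
        (forall i, (1 <= i <= n)%N ->
           same_vertex (x i) (infty A *m (Eprod a i *m X))) /\
        (forall b : nat -> A,
           (forall i, (1 <= i <= n)%N ->
              same_vertex (x i) (infty A *m (Eprod b i *m X))) ->
           forall i, (1 <= i <= n)%N -> b i = a i)) /\
  (forall (n : nat) (X : 'M[A]_2) (a : nat -> A),
      inGL2 X ->
      is_path n (fun i => infty A *m (Eprod a i *m X))).
Proof.
split.
  move=> n x X hp hX h0.
  have [a ha] := exist_all hp hX h0 n (leqnn n).
  exists a; split.
    by move=> i /andP [_ hi]; rewrite inftyE; apply: ha.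
  move=> b hb.
  suff H : forall i, (i <= n)%N -> forall j, (1 <= j <= i)%N -> b j = a j.
    by move=> i /andP [i1 hi]; apply: (H n (leqnn n)); rewrite i1 hi.
  elim=> [|i IH] hi j.
    by rewrite leqn0 andbC => /andP [/eqP ->].
  move=> /andP [j1]; rewrite leq_eqVlt => /orP [/eqP ->|ji]; last first.
    by apply: (IH (ltnW hi) j); rewrite j1 -ltnS.
  have hb' := hb i.+1 hi; have ha' := ha i.+1 hi.
  rewrite inftyE /= -mulmxA (Eprod_ext A a) in hb'; last first.
    by move=> k kk; apply: IH (ltnW hi) _ kk.
  rewrite /= -mulmxA in ha'.
  exact: uniq_step (inGL2_EX a i hX) ha' hb'.
move=> n X a hX; split => i hi.
  have [N [h00 _ _ _ _]] := inv_eqs (inGL2_EX a i hX).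
  by exists (N 0 0), (N 1 0); rewrite !inftyE !row0E.
have /inGL2_det [k hk] := inGL2_EX a i hX.
apply: (@det_inGL2 _ _ k); rewrite -hk /= -mulmxA !inftyE /det2 /mx2 !mxE /=.
rewrite !sum2 /Emx !mxE /=; rewrite ?sum2; ring.
Qed.
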